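(* Every voting rule in the EJR-Exact family satisfies EJR: for every ballot profile $\mathcal{A}$ over $C$, every $k\le|C|$, and every choice of the subprocedures Alg1, Alg2, Alg3 (and every resolution of their choices), the output committee $W$ provides EJR for $(\mathcal{A},k)$.
   Context: Setting: voters $N=\{1,\dots,n\}$, candidates $C=\{c_1,\dots,c_m\}$, approval ballots $A_i\subseteq C$, $\mathcal{A}=(A_1,\dots,A_n)$, $k$ a positive integer with $k\le|C|$, $q=n/k$, $N_c=\{i: c\in A_i\}$, $n_c=|N_c|$. Convention: $\max\emptyset=0$. EJR: for $\ell\in\{1,\dots,k\}$, $N^*\subseteq N$ is $\ell$-cohesive if $|N^*|\ge\ell n/k$ and $|\bigcap_{i\in N^*}A_i|\ge\ell$. A committee $W$, $|W|=k$, provides EJR if for every $\ell$ and every $\ell$-cohesive $N^*$ some $i\in N^*$ has $|A_i\cap W|\ge\ell$. Dissatisfaction level: for $W\subseteq C$ with $|W|\le k$ and $c\in C\setminus W$, $\ell(c,W)$ is the largest nonnegative integer $\ell$ with $\ell=\lfloor \frac{k}{n}|\{i\in N: c\in A_i,\ |A_i\cap W|<\ell\}|\rfloor$. Along a run with current sets $W_j$, write $\ell_j(c)=\ell(c,W_j)$, and for $c\in C\setminus W_j$, $i\in N_c$: $\ell_j(i,c)=\max_{c'\in A_i\setminus(W_j\cup\{c\})}\ell_j(c')$, and $g_i^j(c)=0$ if $\ell_j(i,c)\le|A_i\cap W_j|$, $g_i^j(c)=\frac{\ell_j(i,c)-|A_i\cap W_j|-1}{\ell_j(i,c)}$ otherwise.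 EJR-Exact family (parametrized by arbitrary subprocedures Alg1, Alg2, Alg3): set $W_0=\emptyset$, $f_i^0=1$ for all $i$. For $j=1,\dots,k$: for each $c\in C\setminus W_{j-1}$ compute $x_c=\sum_{i\in N_c}(f_i^{j-1}-g_i^{j-1}(c))$. If some $c$ has $x_c\ge q$ (Stage 1, ''normal iteration''): Alg1 selects any such $w_j$; set $f_i^j=f_i^{j-1}$ for $i\notin N_{w_j}$; Alg2 chooses values $f_i^j$ for $i\in N_{w_j}$ with $0\le f_i^j\le f_i^{j-1}$, $\sum_{i\in N_{w_j}}(f_i^{j-1}-f_i^j)=q$, and $f_i^j\ge g_i^{j-1}(w_j)$ for every $i\in N_{w_j}$ with $\ell_{j-1}(i,w_j)>|A_i\cap W_{j-1}|$; set $W_j=W_{j-1}\cup\{w_j\}$. Otherwise stop the loop. Finally, if fewer than $k$ candidates have been selected (Stage 2), Alg3 adds arbitrary further candidates from $C$ not yet selected until $k$ are selected. The output $W$ is the set of all selected candidates. *)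

(* Defs.v *)
From HB Require Import structures.
From mathcomp Require Import all_boot all_order all_algebra.
Set Implicit Arguments. Unset Strict Implicit. Unset Printing Implicit Defensive.
Import Order.TTheory GRing.Theory Num.Theory.

(* Voters are 'I_n, candidates are 'I_m, ballots A : 'I_n -> {set 'I_m}. *)

Section Defs.
Variables (n m k : nat) (A : 'I_n -> {set 'I_m}).

(* N* is l-cohesive: |N*| >= l n / k (i.e. k |N*| >= l n) and |/\ A_i| >= l *)
Definition cohesive (l : nat) (Ns : {set 'I_n}) : bool :=
  (l * n <= k * #|Ns|)%N && (l <= #|\bigcap_(i in Ns) A i|)%N.

Definition EJR (W : {set 'I_m}) : Prop :=
  #|W| = k /\
  forall (l : nat) (Ns : {set 'I_n}), (1 <= l <= k)%N -> cohesive l Ns ->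
    exists2 i, i \in Ns & (l <= #|A i :&: W|)%N.

Definition dcount (c : 'I_m) (W : {set 'I_m}) (l : nat) : nat :=
  #|[set i | (c \in A i) && (#|A i :&: W| < l)%N]|.

(* ell(c,W): the largest l with l = floor(k/n * dcount c W l).
   Every such l satisfies l <= k (dcount <= n), so we maximise over l < k+1. *)
Definition ell (c : 'I_m) (W : {set 'I_m}) : nat :=
  \max_(l < k.+1 | (l : nat) == (k * dcount c W l) %/ n) (l : nat).

(* ell(i,c) = max over c' in A_i \ (W ∪ {c}) of ell(c'), with max ∅ = 0 *)
Definition ell_vc (i : 'I_n) (c : 'I_m) (W : {set 'I_m}) : nat :=
  \max_(c' in A i :\: (c |: W)) ell c' W.

Variable R : realFieldType.
Local Open Scope ring_scope.

Definition gval (i : 'I_n) (c : 'I_m) (W : {set 'I_m}) : R :=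
  let L := ell_vc i c W in
  let a := #|A i :&: W| in
  if (L <= a)%N then 0 else ((L - a - 1)%N)%:R / L%:R.

Definition quota : R := n%:R / k%:R.

Definition xval (f : 'I_n -> R) (W : {set 'I_m}) (c : 'I_m) : R :=
  \sum_(i | c \in A i) (f i - gval i c W).

Definition Wpre (ws : seq 'I_m) (j : nat) : {set 'I_m} := [set c in take j ws].

(* A complete run of an EJR-Exact rule: ws = (w_1,...,w_t) are the candidates
   selected in Stage 1, fs j = f^j the weights, W the final output. *)
Definition EJRExact_run (ws : seq 'I_m) (fs : nat -> 'I_n -> R)
    (W : {set 'I_m}) : Prop :=
  [/\ (size ws <= k)%N /\ (forall i, fs 0%N i = 1),
      (forall (j : nat) (x0 : 'I_m), (j < size ws)%N ->
        let Wj := Wpre ws j in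
        let w := nth x0 ws j in
        [/\ w \notin Wj,
            quota <= xval (fs j) Wj w,
            (forall i, w \notin A i -> fs j.+1 i = fs j i),
            (forall i, w \in A i ->
               [/\ 0 <= fs j.+1 i, fs j.+1 i <= fs j i &
                   ((#|A i :&: Wj| < ell_vc i w Wj)%N -> gval i w Wj <= fs j.+1 i)]) &
            \sum_(i | w \in A i) (fs j i - fs j.+1 i) = quota]),
      (* loop stopped early only if no candidate reaches the quota *)
      ((size ws < k)%N -> forall c, c \notin Wpre ws (size ws) ->
          xval (fs (size ws)) (Wpre ws (size ws)) c < quota),
      (* Stage 2: arbitrary completion to k candidates *)
      Wpre ws (size ws) \subset W & #|W| = k].
End Defs.

(* Main.v *)
Require Import Defs.
From HB Require Import structures.
From mathcomp Require Import all_boot all_order all_algebra.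
From mathcomp Require Import zify ring lra.
Set Implicit Arguments. Unset Strict Implicit. Unset Printing Implicit Defensive.
Import Order.TTheory GRing.Theory Num.Theory.

Section Ineqs.
Local Open Scope ring_scope.
Lemma ineq_upd (R : realFieldType) (M L a f : R) : 0 <= M -> M <= L -> 0 < L ->
  L - a - 1 <= f * L -> 0 <= f -> 0 <= a -> M - (a + 1) <= M * f.
Proof. move=> *. nra. Qed.
Lemma ineq_same (R : realFieldType) (M M' a f : R) : 0 <= M' -> M' <= M -> 0 <= a ->
  M - a <= M * f -> 0 <= f -> M' - a <= M' * f.
Proof.
move=> h1 h2 h3 h4 h5; case: (lerP M' a) => h6; first nra.
have hM : 0 < M by lra.
have : M * (M' - a) <= M * (M' * f) by nra.
by rewrite ler_pM2l.
Qed.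
Lemma ineq_term (R : realFieldType) (L L' a f : R) : 0 < L' -> L' <= L -> 0 <= a -> a + 1 <= L' ->
  L - a <= L * f -> L^-1 <= f - (L' - a - 1) / L'.
Proof.
move=> h1 h2 h3 h4 h5.
have hL : 0 < L by lra.
have e1 : L * L^-1 = 1 by rewrite mulfV // gt_eqF.
have e2 : L' * L'^-1 = 1 by rewrite mulfV // gt_eqF.
have p1 : 0 < L^-1 by rewrite invr_gt0.
have p2 : 0 < L'^-1 by rewrite invr_gt0.
have p3 : L^-1 <= L'^-1 by rewrite lef_pV2 ?posrE.
have hf : 1 - a * L^-1 <= f.
  have := ler_wpM2r (ltW p1) h5. rewrite -mulrA (mulrC f) mulrA e1 mul1r mulrBl e1. done.
rewrite mulrBl mulrBl e2.
nra.
Qed.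

Lemma ineq_term0 (R : realFieldType) (L a f : R) : 0 <= a -> a + 1 <= L ->
  L - a <= L * f -> L^-1 <= f.
Proof.
move=> h1 h2 h3; have hL : 0 < L by lra.
by rewrite -(ler_pM2l hL) mulfV ?gt_eqF //; lra.
Qed.
End Ineqs.

Section Aux.
Variables (R : realFieldType) (n m k : nat) (A : 'I_n -> {set 'I_m}) (ws : seq 'I_m)
  (fs : nat -> 'I_n -> R) (Wout : {set 'I_m}).
Hypotheses (n_gt0 : (0 < n)%N) (k_gt0 : (0 < k)%N).
Hypothesis run : EJRExact_run k A ws fs Wout.


Definition hh c W l := (k * dcount A c W l) %/ n.

Lemma dcount_monol c W l1 l2 : (l1 <= l2)%N -> (dcount A c W l1 <= dcount A c W l2)%N.
Proof.
move=> le; apply: subset_leq_card; apply/subsetP=> i; rewrite !inE => /andP[-> H].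
exact: leq_trans H le.
Qed.

Lemma dcount_antiW c (W1 W2 : {set 'I_m}) l : W1 \subset W2 -> (dcount A c W2 l <= dcount A c W1 l)%N.
Proof.
move=> sW; apply: subset_leq_card; apply/subsetP=> i; rewrite !inE => /andP[-> H].
apply: leq_ltn_trans H; apply: subset_leq_card; exact: setIS.
Qed.

Lemma dcount_le_n c W l : (dcount A c W l <= n)%N.
Proof. by rewrite /dcount; apply: leq_trans (max_card _) _; rewrite card_ord. Qed.

Lemma hh_le_k c W l : (hh c W l <= k)%N.
Proof.
rewrite /hh; apply: leq_trans (leq_div2r n (leq_mul (leqnn k) (dcount_le_n c W l))) _.
by rewrite mulnK.
Qed.

Lemma hh_monol c W l1 l2 : (l1 <= l2)%N -> (hh c W l1 <= hh c W l2)%N.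
Proof. by move=> le; apply: leq_div2r; apply: leq_mul => //; exact: dcount_monol. Qed.

Lemma hh_antiW c (W1 W2 : {set 'I_m}) l : W1 \subset W2 -> (hh c W2 l <= hh c W1 l)%N.
Proof. by move=> s; apply: leq_div2r; apply: leq_mul => //; exact: dcount_antiW. Qed.

Lemma ell_fixed_le c W l : (l < k.+1)%N -> l = hh c W l -> (l <= ell k A c W)%N.
Proof.
move=> lk e; rewrite /ell.
apply: (@leq_bigmax_cond _ (fun i : 'I_k.+1 => (i:nat) == hh c W i) (fun i => i:nat) (Ordinal lk)).
by rewrite /= -e.
Qed.

Lemma ell_ge c W l : (l <= k)%N -> (l <= hh c W l)%N -> (l <= ell k A c W)%N.
Proof.
move=> lk lh; have [d kd] : exists d, (k - l <= d)%N by exists (k - l).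
elim: d l lk lh kd => [|d IH] l lk lh kd.
- apply: ell_fixed_le; first by rewrite ltnS.
  have := hh_le_k c W l; lia.
- case: (eqVneq l (hh c W l)) => [e|ne]; first by apply: ell_fixed_le => //; rewrite ltnS.
  have lt : (l < hh c W l)%N by rewrite ltn_neqAle ne lh.
  apply: leq_trans (ltnW lt) _; apply: IH.
  + exact: hh_le_k.
  + exact: hh_monol (ltnW lt).
  + have := hh_le_k c W l; lia.
Qed.

Lemma ell_fix c W : ell k A c W = hh c W (ell k A c W).
Proof.
have P0 : (fun i : 'I_k.+1 => (i:nat) == hh c W i) ord0.
  rewrite /= /hh.
  suff -> : dcount A c W 0 = 0%N by rewrite muln0 div0n.
  by apply/eqP; rewrite cards_eq0; apply/eqP/setP => i; rewrite !inE ltn0 andbF.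
rewrite /ell (@bigop.bigmax_eq_arg _ ord0 (fun i : 'I_k.+1 => (i:nat) == hh c W i) _ P0).
by case: arg_maxnP => // i /eqP.
Qed.

Lemma ell_le_k c W : (ell k A c W <= k)%N.
Proof. by rewrite /ell; apply/bigmax_leqP => i _; rewrite -ltnS. Qed.

Lemma ell_mono c (W1 W2 : {set 'I_m}) : W1 \subset W2 -> (ell k A c W2 <= ell k A c W1)%N.
Proof.
move=> s; apply: ell_ge; first exact: ell_le_k.
rewrite {1}ell_fix; exact: hh_antiW.
Qed.

Lemma ell_count c W : (ell k A c W * n <= k * dcount A c W (ell k A c W))%N.
Proof. rewrite {1}ell_fix /hh; exact: leq_trunc_div. Qed.


Definition Mv i (X : {set 'I_m}) := (\max_(c' in A i :\: X) ell k A c' X)%N.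

Lemma Wpre_succ j x0 : (j < size ws)%N -> Wpre ws j.+1 = nth x0 ws j |: Wpre ws j.
Proof. move=> js; rewrite /Wpre (take_nth x0 js); apply/setP=> y; by rewrite !inE mem_rcons inE. Qed.

Lemma Mv_le_vc i w (X : {set 'I_m}) : (Mv i (w |: X) <= ell_vc k A i w X)%N.
Proof.
apply/bigmax_leqP => c' Hc'.
apply: leq_trans (ell_mono c' (subsetUr [set w] X)) _.
rewrite /ell_vc; exact: (@leq_bigmax_cond _ (fun c => c \in A i :\: (w |: X)) (fun c => ell k A c X) _ Hc').
Qed.

Lemma Mv_mono i w (X : {set 'I_m}) : (Mv i (w |: X) <= Mv i X)%N.
Proof.
apply/bigmax_leqP => c' Hc'.
apply: leq_trans (ell_mono c' (subsetUr [set w] X)) _.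
have : c' \in A i :\: X by move: Hc'; rewrite !inE negb_or => /andP[/andP[_ ->] ->].
exact: (@leq_bigmax_cond _ (fun c => c \in A i :\: X) (fun c => ell k A c X)).
Qed.

Lemma a_succ i w (X : {set 'I_m}) : w \in A i -> w \notin X -> #|A i :&: (w |: X)| = #|A i :&: X|.+1.
Proof.
move=> wA wX.
have -> : A i :&: (w |: X) = w |: (A i :&: X).
  apply/setP=> x; rewrite !inE; case: eqP => [->|] //=; by rewrite wA.
by rewrite cardsU1 inE (negbTE wX) andbF.
Qed.

Lemma a_same i w (X : {set 'I_m}) : w \notin A i -> A i :&: (w |: X) = A i :&: X.
Proof.
move=> wA; apply/setP=> x; rewrite !inE; case: eqP => [->|] //=.
by rewrite (negbTE wA).
Qed.

Local Open Scope ring_scope.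

Definition Inv j := forall i, 0 <= fs j i /\
  (Mv i (Wpre ws j))%:R - (#|A i :&: Wpre ws j|)%:R <= (Mv i (Wpre ws j))%:R * fs j i.

Lemma Inv0 : Inv 0.
Proof.
case: run => [[_ H0] _ _ _ _] i; rewrite H0 mulr1; split => //.
have := ler0n R #|A i :&: Wpre ws 0|; lra.
Qed.

Lemma Inv_step j (x0 : 'I_m) : (j < size ws)%N -> Inv j -> Inv j.+1.
Proof.
move=> js IH i.
case: run => [_ Hstep _ _ _].
move: (Hstep j x0 js) => /= [wn _ Hout Hin _].
rewrite (Wpre_succ x0 js).
have [f0 Hinv] := IH i.
case: (boolP (nth x0 ws j \in A i)) => wA.
- have [g0 gle gg] := Hin i wA.
  rewrite a_succ //; split => //.
  have hM' := Mv_le_vc i (nth x0 ws j) (Wpre ws j).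
  case: (ltnP #|A i :&: Wpre ws j| (ell_vc k A i (nth x0 ws j) (Wpre ws j))) => hL.
  + have := gg hL; rewrite /gval leqNgt hL /=.
    rewrite ler_pdivrMr ?ltr0n; last by lia.
    move=> H.
    move: H hM' hL; set L := ell_vc _ _ _ _ _; set a := #|A i :&: Wpre ws j| => H hM' hL.
    have e : ((L - a - 1)%N)%:R = L%:R - a%:R - 1 :> R.
      rewrite -subnDA natrB; last by lia.
      by rewrite natrD mulr1n opprD addrA.
    rewrite e in H; rewrite -addn1 natrD mulr1n.
    apply: (ineq_upd (L := L%:R)) => //; first by rewrite ler_nat.
    by rewrite ltr0n; lia.
  + have : (Mv i (nth x0 ws j |: Wpre ws j))%:R <= (#|A i :&: Wpre ws j|)%:R :> R.
      by rewrite ler_nat; exact: leq_trans hM' hL.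
    have := mulr_ge0 (ler0n R (Mv i (nth x0 ws j |: Wpre ws j))) g0.
    rewrite -natr1; lra.
- rewrite Hout // a_same //; split => //.
  apply: (ineq_same (M := (Mv i (Wpre ws j))%:R)) => //; by rewrite ler_nat Mv_mono.
Qed.

Lemma Inv_all (x0 : 'I_m) j : (j <= size ws)%N -> Inv j.
Proof.
elim: j => [|j IH] hj; first exact: Inv0.
exact: Inv_step x0 hj (IH (ltnW hj)).
Qed.

Lemma sum_step j (x0 : 'I_m) : (j < size ws)%N ->
  \sum_i fs j.+1 i = \sum_i fs j i - quota n k R.
Proof.
move=> js; case: run => [_ Hstep _ _ _].
move: (Hstep j x0 js) => /= [_ _ Hout _ Hsum].
rewrite sumrB in Hsum.
rewrite (bigID (fun i => nth x0 ws j \in A i)) /=.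
rewrite [in RHS](bigID (fun i => nth x0 ws j \in A i)) /=.
rewrite [X in _ + X = _](eq_bigr (fun i => fs j i)); last by move=> i /Hout.
lra.
Qed.

Lemma sum_all (x0 : 'I_m) j : (j <= size ws)%N -> \sum_i fs j i = n%:R - j%:R * quota n k R.
Proof.
elim: j => [|j IH] hj.
  case: run => [[_ H0] _ _ _ _]; under eq_bigr do rewrite H0.
  by rewrite sumr_const card_ord mul0r subr0.
rewrite (sum_step x0 hj) IH ?(ltnW hj) // -addn1 natrD; lra.
Qed.


Lemma gval_ge0 i c (X : {set 'I_m}) : 0 <= gval k A R i c X.
Proof. rewrite /gval /=; case: ifP => _ //; apply: divr_ge0; exact: ler0n. Qed.

Lemma ejr_aux : (k <= m)%N -> EJR k A Wout.
Proof.
move=> km.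
have x0 : 'I_m := Ordinal (leq_trans k_gt0 km).
case: run => [[tk _] _ Hstop sub cardW].
split => // l Ns /andP[l1 lk] /andP[coh1 coh2].
case: (boolP [exists i in Ns, (l <= #|A i :&: Wout|)%N]) => [/existsP[i /andP[iN hi]]|]; first by exists i.
rewrite negb_exists => /forallP Hall.
have Hlt : forall i, i \in Ns -> (#|A i :&: Wout| < l)%N.
  by move=> i iN; move: (Hall i); rewrite iN /= -ltnNge.
have [E|[i0 i0N]] := set_0Vmem Ns.
  by move: coh1; rewrite E cards0 muln0; lia.
have [c0 c0I c0W] : exists2 c0, c0 \in \bigcap_(i in Ns) A i & c0 \notin Wout.
  case: (boolP (\bigcap_(i in Ns) A i \subset Wout)) => [s|/subsetPn[c0 ? ?]]; last by exists c0.
  have : (#|\bigcap_(i in Ns) A i| <= #|A i0 :&: Wout|)%N.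
    apply: subset_leq_card; rewrite subsetI s andbT; exact: bigcap_inf.
  have := Hlt i0 i0N; lia.
set t := size ws; set Wt := Wpre ws t.
have c0t : c0 \notin Wt by apply: contra c0W; exact: (subsetP sub).
have lell : (l <= ell k A c0 Wt)%N.
  apply: ell_ge => //; rewrite /hh leq_divRL //; apply: leq_trans coh1 _.
  rewrite leq_mul2l; apply/orP; right.
  apply: subset_leq_card; apply/subsetP => i iN; rewrite inE (bigcapP c0I) //=.
  apply: leq_ltn_trans (Hlt i iN); apply: subset_leq_card; apply: setIS; exact: sub.
case: (@arg_maxnP _ c0 (fun c => c \notin Wt) (fun c => ell k A c Wt) c0t) => c cn cmax.
set L := ell k A c Wt.
have L1 : (1 <= L)%N by apply: leq_trans l1 (leq_trans lell (cmax _ c0t)).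
have Inv_t := Inv_all x0 (leqnn t).
have hLR : 0 < L%:R :> R by rewrite ltr0n.
have xq : quota n k R <= xval k A (fs t) Wt c.
  rewrite /xval.
  apply: le_trans (_ : _ <= \sum_(i | c \in A i) (if (#|A i :&: Wt| < L)%N then L%:R^-1 else 0)) _.
    rewrite -big_mkcondr /=.
    rewrite (eq_bigl (fun i => i \in [set i | (c \in A i) && (#|A i :&: Wt| < L)%N])); last by move=> i; rewrite inE.
    rewrite sumr_const -/(dcount A c Wt L).
    have hc := ell_count c Wt.
    rewrite /quota ler_pdivrMr ?ltr0n // -[_ *+ dcount _ _ _ _]mulr_natr.
    rewrite -(ler_pM2l hLR) !mulrA mulfV ?gt_eqF // mul1r -!natrM ler_nat.
    by rewrite [X in (_ <= X)%N]mulnC; exact: hc.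
  apply: ler_sum => i ci.
  have [f0 Hi] := Inv_t i.
  have eM : Mv i Wt = L.
    apply/eqP; rewrite eqn_leq; apply/andP; split.
      apply/bigmax_leqP => c'; rewrite inE => /andP[c'W _]; exact: cmax.
    apply: (@leq_bigmax_cond _ (fun c' => c' \in A i :\: Wt) (fun c' => ell k A c' Wt)).
    by rewrite inE cn ci.
  rewrite eM in Hi.
  have hL' : (ell_vc k A i c Wt <= L)%N.
    rewrite /ell_vc; apply/bigmax_leqP => c'; rewrite !inE negb_or => /andP[/andP[_ c'W] _].
    by apply: cmax; rewrite /Wt /Wpre inE.
  rewrite /gval /=.
  case: (leqP (ell_vc k A i c Wt) #|A i :&: Wt|) => hLa.
  - rewrite subr0; case: ifP => // haL.
    apply: (ineq_term0 (a := (#|A i :&: Wt|)%:R)) => //; by rewrite natr1 ler_nat.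
  - rewrite ifT; last by apply: leq_trans hLa hL'.
    move: hLa hL'; set L' := ell_vc _ _ _ _ _; set a := #|A i :&: Wt| => hLa hL'.
    have e : ((L' - a - 1)%N)%:R = L'%:R - a%:R - 1 :> R.
      rewrite -subnDA natrB; last by lia.
      by rewrite natrD mulr1n opprD addrA.
    rewrite e; apply: ineq_term => //.
    + by rewrite ltr0n; lia.
    + by rewrite ler_nat.
    + by rewrite natr1 ler_nat.
have qpos : 0 < quota n k R by rewrite /quota divr_gt0 ?ltr0n.
case: (ltnP t k) => htk.
  have := Hstop htk c cn; lra.
have tk' : t = k by apply/eqP; rewrite eqn_leq tk htk.
have hsum := sum_all x0 (leqnn t).
have : xval k A (fs t) Wt c <= \sum_i fs t i.
  rewrite /xval; apply: le_trans (_ : _ <= \sum_(i | c \in A i) fs t i) _.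
    apply: ler_sum => i _; have := gval_ge0 i c Wt; lra.
  rewrite [X in _ <= X](bigID (fun i => c \in A i)) /= lerDl; apply: sumr_ge0 => i _.
  exact: (Inv_t i).1.
have z : n%:R - t%:R * quota n k R = 0.
  by rewrite tk' /quota mulrC divfK ?pnatr_eq0 -?lt0n // subrr.
rewrite hsum z => h; exfalso; move: (le_trans xq h); by rewrite leNgt qpos.
Qed.
End Aux.

Theorem mainTheorem7 (R : realFieldType) (n m k : nat)
    (A : 'I_n -> {set 'I_m}) (ws : seq 'I_m) (fs : nat -> 'I_n -> R)
    (W : {set 'I_m}) :
  (0 < n)%N -> (0 < k)%N -> (k <= m)%N ->
  EJRExact_run k A ws fs W ->
  EJR k A W.
Proof. move=> hn hk hkm run; exact: ejr_aux hn hk run hkm. Qed.
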